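(* Let $R$ be a discrete $\Gamma$-ring and let $w\in R[2]$ be a formal sum law in $R$. Then there is a unique multiplicative map (morphism of $\Gamma$-rings) $\phi: H\mathbb{N}\to R$ such that $\phi(1_{2^n})=w^n\in R[2^n]$ for all $n\ge 0$. Concretely, for $(n_1,\dots,n_k)\in \mathbb{N}[k]$ one has $\phi(n_1,\dots,n_k)=f(w^n)$ for any $n$ and any pointed map $f:[2^n]\to[k]$ with $f(1_{2^n})=(n_1,\dots,n_k)$.
   Context: Let $[n]=\{0,1,\dots,n\}$, pointed at $0$. $\Gamma^{op}$ is the category with objects $[n]$, $n\ge0$, and all pointed maps. A $\Gamma$-space is a functor $F$ from $\Gamma^{op}$ to pointed simplicial sets with $F[0]$ a point; it is extended to all finite pointed sets by choosing isomorphisms with the $[n]$. For a pointed map $f:K\to L$ we write $f$ also for $F(f)$. The symmetric group $\Sigma_n$ acts on $[n]$ by permuting $\{1,\dots,n\}$ and hence acts on $F[n]$. We identify $[n]\wedge[m]$ with $[nm]$ using the inverse lexicographic order: $i\wedge j\mapsto (j-1)n+i$ for $1\le i\le n,\ 1\le j\le m$. A $\Gamma$-ring is a $\Gamma$-space $R$ with a unit $\eta:\mathbf S\to R$ ($\mathbf S$ the inclusion functor of $\Gamma^{op}$ into pointed sets) and an associative unital multiplication, equivalently a family of maps $R(K)\wedge R(L)\to R(K\wedge L)$, $p\wedge q\mapsto pq$, natural in $K$ and $L$, associative, with unit $1:=\eta(1)\in R[1]$. $R$ is discrete if each $R(K)$ is a set (a constant simplicial set). For $w\in R[2]$, $w^k\in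 R[2^k]$ denotes the $k$-fold product (with $[2]^{\wedge k}=[2^k]$ via the identification above), $w^0=1$. A multiplicative map $\phi:A\to B$ of $\Gamma$-rings is a natural transformation with $\phi\circ\eta_A=\eta_B$ and $\phi(pq)=\phi(p)\phi(q)$. The pointed map $p^n_i:[n]\to[n-1]$ ($1\le i\le n$) is given by $p^n_i(j)=j$ for $j<i$, $p^n_i(i)=0$, $p^n_i(j)=j-1$ for $j>i$. $H\mathbb{N}$ is the $\Gamma$-ring with $H\mathbb{N}(K)=$ the reduced free commutative monoid on $K$ (so $H\mathbb{N}[k]=\mathbb{N}^k$, $\mathbb N$ including $0$), pointed maps acting by summing coefficients along fibres, unit sending $k\in K$ to the generator $k$, and multiplication $(\sum_k a_k k)(\sum_l b_l l)=\sum_{k\wedge l}a_kb_l(k\wedge l)$. $1_n=(1,\dots,1)\in H\mathbb{N}[n]$. A formal sum law in a $\Gamma$-ring $R$ is an element $w\in R[2]$ with (1) $p^2_1(w)=1$ and $p^2_2(w)=1$, and (2) for every $k\ge1$, $w^k\in R[2^k]$ is fixed by the action of $\Sigma_{2^k}$. *)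

(* Defs.v *)
From HB Require Import structures.
From mathcomp Require Import all_boot.
Set Implicit Arguments. Unset Strict Implicit. Unset Printing Implicit Defensive.

(* [n] = {0,...,n} is 'I_n.+1, pointed at ord0.
   Pointed maps [n] -> [m] : finite functions sending 0 to 0. *)
Definition ptmap (n m : nat) := {f : {ffun 'I_n.+1 -> 'I_m.+1} | f ord0 == ord0}.

Definition papp n m (f : ptmap n m) : 'I_n.+1 -> 'I_m.+1 := fun x => sval f x.

Lemma mkp_proof n m (f : 'I_n.+1 -> 'I_m.+1) :
  [ffun x => if x == ord0 then ord0 else f x] ord0 == ord0.
Proof. by rewrite ffunE eqxx. Qed.

Definition mkp n m (f : 'I_n.+1 -> 'I_m.+1) : ptmap n m :=
  exist _ [ffun x => if x == ord0 then ord0 else f x] (mkp_proof f).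

Definition pid n : ptmap n n := mkp id.
Definition pcomp n m l (g : ptmap m l) (f : ptmap n m) : ptmap n l :=
  mkp (fun x => papp g (papp f x)).

Definition castp n m (e : n = m) : ptmap n m := mkp (cast_ord (congr1 S e)).

(* f /\ g : [n]^[m] = [n*m] -> [n']^[m'] = [n'*m'], using the inverse
   lexicographic identification i /\ j |-> (j-1) n + i. *)
Definition smash_fun n m n' m' (f : ptmap n n') (g : ptmap m m')
  (x : 'I_(n * m).+1) : 'I_(n' * m').+1 :=
  let i := (x.-1 %% n).+1 in
  let j := (x.-1 %/ n).+1 in
  let i' := papp f (inord i) in
  let j' := papp g (inord j) in
  if (i' == ord0) || (j' == ord0) then ord0
  else inord ((j'.-1) * n' + i').

Definition psmash n m n' m' (f : ptmap n n') (g : ptmap m m') : ptmap (n * m) (n' * m') :=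
  mkp (smash_fun f g).

Definition pproj n (i : nat) : ptmap n.+1 n :=
  mkp (fun j : 'I_n.+2 =>
         if j < i then inord j else if val j == i then ord0 else inord j.-1).

Record GData := {
  car : nat -> Type;
  act : forall n m, ptmap n m -> car n -> car m;
  mul : forall n m, car n -> car m -> car (n * m);
  one : car 1
}.

Definition is_GammaRing (R : GData) : Prop :=
  (forall x y : car R 0, x = y) /\
  (forall n (x : car R n), act (pid n) x = x) /\
  (forall n m l (f : ptmap n m) (g : ptmap m l) (x : car R n),
      act (pcomp g f) x = act g (act f x)) /\
  (forall n m n' m' (f : ptmap n n') (g : ptmap m m') (x : car R n) (y : car R m),
      act (psmash f g) (mul x y) = mul (act f x) (act g y)) /\
  (forall n m l (x : car R n) (y : car R m) (z : car R l),
      act (castp (esym (mulnA n m l))) (mul (mul x y) z) = mul x (mul y z)) /\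
  (forall n (x : car R n), act (castp (mul1n n)) (mul (one R) x) = x) /\
  (forall n (x : car R n), act (castp (muln1 n)) (mul x (one R)) = x).

Definition is_mult (A B : GData) (phi : forall n, car A n -> car B n) : Prop :=
  (forall n m (f : ptmap n m) (x : car A n), phi m (act f x) = act f (phi n x)) /\
  phi 1 (one A) = one B /\
  (forall n m (x : car A n) (y : car A m), phi (n * m) (mul x y) = mul (phi n x) (phi m y)).

Fixpoint wpow (R : GData) (w : car R 2) (k : nat) : car R (2 ^ k) :=
  match k with
  | 0 => act (castp (esym (expn0 2))) (one R)
  | k'.+1 => act (castp (esym (expnS 2 k'))) (mul w (wpow w k'))
  end.

Definition formal_sum_law (R : GData) (w : car R 2) : Prop :=
  act (pproj 1 1) w = one R /\ act (pproj 1 2) w = one R /\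
  (forall k, 1 <= k -> forall s : ptmap (2 ^ k) (2 ^ k),
      injective (papp s) -> act s (wpow w k) = wpow w k).

(* H N: H N[k] = N^k; coordinate i : 'I_k is the coefficient of the point i+1. *)
Definition coef k (a : {ffun 'I_k -> nat}) (i : nat) : nat :=
  if @insub nat (fun x => x < k) 'I_k i is Some j then a j else 0.

Definition HN_act n m (f : ptmap n m) (a : {ffun 'I_n -> nat}) : {ffun 'I_m -> nat} :=
  [ffun j : 'I_m => \sum_(i < n | papp f (lift ord0 i) == lift ord0 j) a i].

Definition HN_mul n m (a : {ffun 'I_n -> nat}) (b : {ffun 'I_m -> nat})
  : {ffun 'I_(n * m) -> nat} :=
  [ffun c : 'I_(n * m) => coef a (c %% n) * coef b (c %/ n)].

Definition HN : GData :=
  {| car := fun k => {ffun 'I_k -> nat};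
     act := HN_act; mul := HN_mul; one := [ffun _ => 1] |}.

Definition ones k : car HN k := [ffun _ => 1].

(* Main.v *)
Require Import Defs.
From HB Require Import structures.
From mathcomp Require Import all_boot all_fingroup.
From mathcomp Require Import zify.
Require Import Defs.
Set Implicit Arguments. Unset Strict Implicit. Unset Printing Implicit Defensive.

Lemma papp0 n m (f : ptmap n m) : papp f ord0 = ord0.
Proof. by rewrite /papp; case: f => f /= /eqP. Qed.

Lemma ptmap_eq n m (f g : ptmap n m) : papp f =1 papp g -> f = g.
Proof.
case: f g => f Hf [g Hg] /= H.
have E : f = g by apply/ffunP => x; exact: H x.
subst g; congr exist; exact: eq_irrelevance.
Qed.

Lemma papp_mkp n m (F : 'I_n.+1 -> 'I_m.+1) x :
  papp (mkp F) x = if x == ord0 then ord0 else F x.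
Proof. by rewrite /papp /= ffunE. Qed.

Lemma lift0_neq n (i : 'I_n) : (lift ord0 i == ord0) = false.
Proof. by rewrite eq_sym (negbTE (neq_lift _ _)). Qed.

Lemma papp_mkpL n m (F : 'I_n.+1 -> 'I_m.+1) (i : 'I_n) :
  papp (mkp F) (lift ord0 i) = F (lift ord0 i).
Proof. by rewrite papp_mkp lift0_neq. Qed.

Definition vid n m (f : ptmap n m) := forall x, val (papp f x) = val x.

Lemma vid_eq n m (f g : ptmap n m) : vid f -> vid g -> f = g.
Proof. by move=> Hf Hg; apply: ptmap_eq => x; apply: val_inj; rewrite Hf Hg. Qed.

Lemma vid_pid n : vid (pid n).
Proof. by move=> x; rewrite papp_mkp; case: eqP => // ->. Qed.

Lemma vid_castp n m (e : n = m) : vid (castp e).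
Proof. by move=> x; rewrite papp_mkp; case: eqP => // ->. Qed.

Lemma vid_pcomp n m l (g : ptmap m l) (f : ptmap n m) : vid g -> vid f -> vid (pcomp g f).
Proof. by move=> Hg Hf x; rewrite papp_mkp; case: eqP => [->|] //; rewrite Hg Hf. Qed.

Lemma vid_psmash n m n' m' (f : ptmap n n') (g : ptmap m m') :
  n = n' -> vid f -> vid g -> vid (psmash f g).
Proof.
move=> e Hf Hg x; rewrite papp_mkp; case: eqP => [->|/eqP x0] //.
rewrite /smash_fun.
have xpos : 0 < x by move: x0; rewrite -(inj_eq val_inj) /= lt0n.
have := ltn_ord x; rewrite ltnS => xle.
have npos : 0 < n by move: (nat_of_ord x) xle xpos => k; case: (n) => [|//]; rewrite mul0n; lia.
have i1 : (x.-1 %% n).+1 < n.+1 by rewrite ltnS ltn_mod.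
set jj := papp g (inord (x.-1 %/ n).+1).
have Hjj : val jj = (x.-1 %/ n).+1.
  rewrite /jj Hg /= inordK // ltnS ltn_divLR //; nia.
have := ltn_ord jj; rewrite Hjj ltnS ltn_divLR // => xm'.
set ii := papp f (inord (x.-1 %% n).+1).
have Hii : val ii = (x.-1 %% n).+1 by rewrite /ii Hf /= inordK.
rewrite -(inj_eq val_inj) Hii /= -(inj_eq val_inj) Hjj /= Hii.
subst n'.
rewrite inordK; last by have := divn_eq x.-1 n; have := ltn_mod x.-1 n; nia.
rewrite addnS -divn_eq; lia.
Qed.


Lemma G_id (R : GData) (HR : is_GammaRing R) n (x : car R n) : act (pid n) x = x.
Proof. by case: HR => _ [H _]. Qed.
Lemma G_comp (R : GData) (HR : is_GammaRing R) n m l (f : ptmap n m) (g : ptmap m l) (x : car R n) :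
  act (pcomp g f) x = act g (act f x).
Proof. by case: HR => _ [_ [H _]]. Qed.
Lemma G_smash (R : GData) (HR : is_GammaRing R) n m n' m' (f : ptmap n n') (g : ptmap m m')
  (x : car R n) (y : car R m) : act (psmash f g) (mul x y) = mul (act f x) (act g y).
Proof. by case: HR => _ [_ [_ [H _]]]. Qed.
Lemma G_assoc (R : GData) (HR : is_GammaRing R) n m l (x : car R n) (y : car R m) (z : car R l) :
  act (castp (esym (mulnA n m l))) (mul (mul x y) z) = mul x (mul y z).
Proof. by case: HR => _ [_ [_ [_ [H _]]]]. Qed.
Lemma G_unitl (R : GData) (HR : is_GammaRing R) n (x : car R n) :
  act (castp (mul1n n)) (mul (one R) x) = x.
Proof. by case: HR => _ [_ [_ [_ [_ [H _]]]]]. Qed.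

Lemma act_vid (R : GData) (HR : is_GammaRing R) n (F : ptmap n n) (x : car R n) :
  vid F -> act F x = x.
Proof. by move=> H; rewrite (vid_eq H (@vid_pid n)) G_id. Qed.

Definition fib n k (f : ptmap n k) : {ffun 'I_k -> nat} := HN_act f (ones n).

Lemma HN_comp n m p (g : ptmap m p) (f : ptmap n m) (a : {ffun 'I_n -> nat}) :
  HN_act (pcomp g f) a = HN_act g (HN_act f a).
Proof.
apply/ffunP => j; rewrite !ffunE.
under [RHS]eq_bigr => l0 _ do rewrite ffunE.
rewrite (exchange_big_dep predT) //= [LHS]big_mkcond /=.
apply: eq_bigr => i _.
rewrite /pcomp papp_mkpL.
case: (unliftP ord0 (papp f (lift ord0 i))) => [/= l0 E|E]; rewrite E.
  have EP : forall l : 'I_m, (papp g (lift ord0 l) == lift ord0 j) && (lift ord0 l0 == lift ord0 l)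
     = (l == l0) && (papp g (lift ord0 l0) == lift ord0 j).
    move=> l; rewrite (inj_eq lift_inj); case: (l =P l0) => [->|ne]; first by rewrite eqxx andbT.
    by rewrite [l0 == l]eq_sym (introF eqP ne) andbF.
  rewrite (eq_bigl _ _ EP).
  case: (papp g (lift ord0 l0) == lift ord0 j).
    by rewrite (big_pred1 l0) // => l; rewrite andbT.
  by rewrite big_pred0 // => l; rewrite andbF.
rewrite papp0 [ord0 == _]eq_sym lift0_neq big_pred0 // => l.
by rewrite [ord0 == _]eq_sym lift0_neq andbF.
Qed.

Lemma HN_vid n m (F : ptmap n m) : n = m -> vid F -> HN_act F (ones n) = ones m.
Proof.
move=> e H; subst m; apply/ffunP => j; rewrite !ffunE.
rewrite (big_pred1 j) ?ffunE // => i /=.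
by rewrite -(inj_eq val_inj) H (inj_eq val_inj) (inj_eq lift_inj).
Qed.

Lemma coefE k (a : {ffun 'I_k -> nat}) i (H : i < k) : coef a i = a (Ordinal H).
Proof. by rewrite /coef insubT. Qed.

Lemma sum_divmod (N M : nat) (P Q : nat -> bool) :
  \sum_(0 <= x < N * M) (P (x %% N) && Q (x %/ N) : nat) =
  (\sum_(0 <= i < N) (P i : nat)) * (\sum_(0 <= j < M) (Q j : nat)).
Proof.
elim: M => [|M IH]; first by rewrite muln0 big_geq // [X in _ * X]big_geq // muln0.
rewrite mulnS addnC.
rewrite (@big_cat_nat _ _ _ (N * M)); last 2 first. by []. by rewrite leq_addr.
rewrite IH.
have -> : \sum_(N * M <= i < N * M + N) (P (i %% N) && Q (i %/ N) : nat) =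
   \sum_(0 <= i < N) (P ((i + N * M) %% N) && Q ((i + N * M) %/ N) : nat).
  by rewrite -{1}[N * M]add0n big_addn addKn.
rewrite /= (@big_nat_recr _ _ _ M 0) //= mulnDr.
congr (_ + _); rewrite big_distrl /=.
apply: eq_big_nat => i /andP [_ iN].
rewrite addnC (mulnC N) modnMDl modn_small // divnMDl ?(leq_ltn_trans _ iN) //.
by rewrite divn_small // addn0 mulnb.
Qed.

Lemma divmod_uniq n a b a' b' : a < n -> a' < n ->
  (b * n + a == b' * n + a') = (a == a') && (b == b').
Proof.
move=> an a'n; have np : 0 < n by apply: leq_ltn_trans an.
apply/eqP/andP => [E|[/eqP -> /eqP ->]] //.
have E1 := congr1 (modn^~ n) E; have E2 := congr1 (divn^~ n) E; move: E1 E2 => /=.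
rewrite !modnMDl !modn_small // !divnMDl // !divn_small // !addn0 => -> ->.
by split.
Qed.

Lemma sum_ones_nat K (C : pred 'I_K) (D : nat -> bool) :
  (forall i : 'I_K, C i = D i) ->
  \sum_(i < K | C i) (ones K) i = \sum_(0 <= i < K) (D i : nat).
Proof.
move=> H; rewrite big_mkcond big_mkord; apply: eq_bigr => i _.
by rewrite ffunE H; case: (D i).
Qed.

Lemma lift_inord n (i : 'I_n) : lift ord0 i = inord i.+1.
Proof. by apply/eqP; rewrite -(inj_eq val_inj) /= inordK // ltnS. Qed.

Lemma HN_smash n m N M (f : ptmap N n) (g : ptmap M m) :
  HN_act (psmash f g) (ones (N * M)) = HN_mul (fib f) (fib g).
Proof.
apply/ffunP => c; rewrite !ffunE.
have cnm := ltn_ord c.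
have np : 0 < n by move: (nat_of_ord c) cnm => k; case: (n) => //; rewrite mul0n.
have cn : c %% n < n by rewrite ltn_mod.
have cq : c %/ n < m by rewrite ltn_divLR //; lia.
rewrite (coefE _ cn) (coefE _ cq) !ffunE.
pose Pf (i : nat) := val (papp f (inord i.+1)) == (c %% n).+1.
pose Qg (j : nat) := val (papp g (inord j.+1)) == (c %/ n).+1.
have HS : forall x : 'I_(N * M), (papp (psmash f g) (lift ord0 x) == lift ord0 c) = Pf (x %% N) && Qg (x %/ N).
  move=> x; rewrite papp_mkpL /smash_fun /= add0n /Pf /Qg.
  set ii := papp f (inord (x %% N).+1).
  set jj := papp g (inord (x %/ N).+1).
  case: ifP => [/orP H|/norP [i0 j0]].
    rewrite [ord0 == _]eq_sym lift0_neq.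
    by case: H => /eqP E; rewrite E /= ?andbF.
  have ip : 0 < ii by move: i0; rewrite -(inj_eq val_inj) /= lt0n.
  have jp : 0 < jj by move: j0; rewrite -(inj_eq val_inj) /= lt0n.
  have il := ltn_ord ii; have jl := ltn_ord jj.
  rewrite -(inj_eq val_inj) /= inordK; last by nia.
  have -> : jj.-1 * n + ii = (jj.-1 * n + ii.-1).+1 by lia.
  rewrite eqSS {1}(divn_eq c n) divmod_uniq //; last by lia.
  by congr andb; apply/eqP/eqP; lia.
apply: etrans (@sum_ones_nat _ _ (fun x => Pf (x %% N) && Qg (x %/ N)) HS) _.
rewrite (@sum_ones_nat _ _ Pf); last first.
  by move=> i; rewrite lift_inord -(inj_eq val_inj).
rewrite (@sum_ones_nat _ _ Qg) ?sum_divmod //.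
by move=> i; rewrite lift_inord -(inj_eq val_inj).
Qed.

Lemma fib_pproj : fib (pproj 1 2) = ones 1.
Proof.
apply/ffunP => j; rewrite !ffunE (ord1 j).
rewrite big_mkcond !big_ord_recl big_ord0 /pproj !papp_mkpL !ffunE.
rewrite -!(inj_eq val_inj) /= !inordK //.
Qed.

Definition rseq k (a : {ffun 'I_k -> nat}) : seq 'I_k.+1 :=
  flatten [seq nseq (a i) (lift ord0 i) | i <- enum 'I_k].
Definition rn k (a : {ffun 'I_k -> nat}) := size (rseq a).
Definition rf k (a : {ffun 'I_k -> nat}) : ptmap (2 ^ rn a) k :=
  mkp (fun x => nth ord0 (rseq a) x.-1).

Lemma count_rseq k (a : {ffun 'I_k -> nat}) j : count_mem (lift ord0 j) (rseq a) = a j.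
Proof.
rewrite /rseq count_flatten sumnE !big_map.
under eq_bigr => i _ do rewrite count_nseq /=.
rewrite -enumT (bigD1_seq j) ?mem_enum ?enum_uniq //= eqxx mul1n big1_seq ?addn0 // => i /andP [ne _].
by rewrite (inj_eq lift_inj) (negbTE ne).
Qed.

Lemma fib_rf k (a : {ffun 'I_k -> nat}) : fib (rf a) = a.
Proof.
apply/ffunP => j; rewrite ffunE.
set s := rseq a.
rewrite (@sum_ones_nat _ _ (fun i => nth ord0 s i == lift ord0 j)); last first.
  by move=> i; rewrite papp_mkpL.
have sle : size s <= 2 ^ rn a by apply: ltnW; apply: ltn_expl.
rewrite (@big_cat_nat _ _ _ (size s)) //= [X in _ + X]big1_seq ?addn0; last first.
  move=> i /andP [_]; rewrite mem_index_iota => /andP [si _].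
  by rewrite nth_default // [ord0 == _]eq_sym lift0_neq.
rewrite -count_rseq -/s -sum1_count (big_nth ord0) big_mkcond /=.
by rewrite [RHS]big_mkcond; apply: eq_bigr => i _; case: (_ == _).
Qed.

Definition tup N k (f : ptmap N k) := [tuple papp f (lift ord0 i) | i < N].

Lemma count_tup N k (f : ptmap N k) y :
  count_mem y (tup f) = \sum_(i < N | papp f (lift ord0 i) == y) 1.
Proof.
by rewrite /tup /= -sum1_count big_map enumT.
Qed.

Lemma count_total k (s : seq 'I_k.+1) :
  count_mem ord0 s + \sum_(j < k) count_mem (lift ord0 j) s = size s.
Proof.
elim: s => [|x s IH] /=; first by rewrite big1.
rewrite big_split /= -IH.
suff H1 : (x == ord0) + \sum_(j < k) (x == lift ord0 j) = 1.
  by rewrite addnACA H1 add1n.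
case: (unliftP ord0 x) => [/= j0 ->|->].
  rewrite lift0_neq (bigD1 j0) //= eqxx big1 // => i ne.
  by rewrite (inj_eq lift_inj) eq_sym (negbTE ne).
by rewrite eqxx big1 // => i _; rewrite [ord0 == _]eq_sym lift0_neq.
Qed.

Lemma fib_tup N k (f : ptmap N k) j : fib f j = count_mem (lift ord0 j) (tup f).
Proof.
rewrite count_tup ffunE; apply: eq_bigr => i _; by rewrite ffunE.
Qed.

Lemma perm_ptmap N k (f g : ptmap N k) : fib f = fib g ->
  exists s : ptmap N N, injective (papp s) /\ g = pcomp f s.
Proof.
move=> E.
have C : forall j : 'I_k, count_mem (lift ord0 j) (tup f) = count_mem (lift ord0 j) (tup g).
  by move=> j; rewrite -!fib_tup E.
have /tuple_permP [p Hp] : perm_eq (tup g) (tup f).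
  rewrite /perm_eq; apply/allP => y _; apply/eqP.
  case: (unliftP ord0 y) => [/= j ->|->]; first by rewrite C.
  have S : \sum_(j < k) count_mem (lift ord0 j) (tup g) = \sum_(j < k) count_mem (lift ord0 j) (tup f).
    by apply: eq_bigr => j _; rewrite C.
  move: (count_total (tup f)) (count_total (tup g)); rewrite !size_tuple -S => Hf Hg.
  by apply/eqP; rewrite -(eqn_add2r (\sum_(j < k) count_mem (lift ord0 j) (tup g))) Hg Hf.
have Ht : tup g = [tuple tnth (tup f) (p i) | i < N] by apply: val_inj.
have Hi : forall i, papp g (lift ord0 i) = papp f (lift ord0 (p i)).
  move=> i; have := congr1 (fun t => tnth t i) Ht.
  by rewrite /= !tnth_mktuple.
exists (mkp (fun x => if unlift ord0 x is Some i then lift ord0 (p i) else ord0)).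
split.
  move=> x y; rewrite !papp_mkp.
  case: (unliftP ord0 x) => [/= i ->|->]; case: (unliftP ord0 y) => [/= i' ->|->] //;
    rewrite ?lift0_neq ?eqxx ?liftK //.
  by move/lift_inj/perm_inj ->.
apply: ptmap_eq => x; rewrite papp_mkp.
case: (unliftP ord0 x) => [/= i ->|->].
  by rewrite lift0_neq papp_mkpL liftK Hi.
by rewrite eqxx papp0.
Qed.

Lemma HN_mul_ones N M : HN_mul (ones N) (ones M) = ones (N * M).
Proof.
apply/ffunP => c; rewrite !ffunE.
have cnm := ltn_ord c.
have np : 0 < N by move: (nat_of_ord c) cnm => k; case: (N) => //; rewrite mul0n.
have cn : c %% N < N by rewrite ltn_mod.
have cq : c %/ N < M by rewrite ltn_divLR //; lia.
by rewrite (coefE _ cn) (coefE _ cq) !ffunE.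
Qed.

Lemma fib_pid n : fib (pid n) = ones n.
Proof. exact: HN_vid (@vid_pid n). Qed.

Lemma wpow_lift (R : GData) (HR : is_GammaRing R) (w : car R 2) (Hw : formal_sum_law w) n :
  exists h : ptmap (2 ^ n.+1) (2 ^ n), wpow w n = act h (wpow w n.+1) /\ fib h = ones (2 ^ n).
Proof.
case: Hw => _ [Hw2 _].
exists (pcomp (castp (mul1n (2 ^ n))) (pcomp (psmash (pproj 1 2) (pid (2 ^ n))) (castp (expnS 2 n)))).
split.
  change (wpow w n.+1) with (act (castp (esym (expnS 2 n))) (mul w (wpow w n))).
  rewrite !(G_comp HR) -(G_comp HR (castp (esym (expnS 2 n)))) act_vid //; last first.
    by apply: vid_pcomp; apply: vid_castp.
  by rewrite (G_smash HR) Hw2 (G_id HR) (G_unitl HR).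
rewrite /fib !HN_comp (HN_vid (expnS 2 n) (vid_castp _)) HN_smash fib_pproj fib_pid.
by rewrite HN_mul_ones (HN_vid (mul1n _) (vid_castp _)).
Qed.

Lemma wpow_down (R : GData) (HR : is_GammaRing R) (w : car R 2) (Hw : formal_sum_law w) n m :
  n <= m -> exists h : ptmap (2 ^ m) (2 ^ n), wpow w n = act h (wpow w m) /\ fib h = ones (2 ^ n).
Proof.
elim: m => [|m IH].
  rewrite leqn0 => /eqP ->; exists (pid _); by rewrite (G_id HR) fib_pid.
rewrite leq_eqVlt => /orP [/eqP ->|lt].
  exists (pid _); by rewrite (G_id HR) fib_pid.
have [h [E1 E2]] := IH lt.
have [h1 [E3 E4]] := wpow_lift HR Hw m.
exists (pcomp h h1); split; first by rewrite (G_comp HR) -E3.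
by rewrite /fib HN_comp -/(fib h1) E4.
Qed.

Lemma welldef (R : GData) (HR : is_GammaRing R) (w : car R 2) (Hw : formal_sum_law w) n m k
  (f : ptmap (2 ^ n) k) (g : ptmap (2 ^ m) k) : fib f = fib g -> act f (wpow w n) = act g (wpow w m).
Proof.
move=> E.
have [h1 [E1 F1]] := wpow_down HR Hw (leq_trans (leq_maxl n m) (leqnSn _)).
have [h2 [E2 F2]] := wpow_down HR Hw (leq_trans (leq_maxr n m) (leqnSn _)).
rewrite E1 E2 -(G_comp HR h1 f) -(G_comp HR h2 g).
have : fib (pcomp f h1) = fib (pcomp g h2).
  by rewrite /fib !HN_comp -/(fib h1) -/(fib h2) F1 F2.
move/perm_ptmap => [s [si ->]].
rewrite (G_comp HR s (pcomp f h1)).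
by case: Hw => _ [_ H]; rewrite (H _ _ s).
Qed.

Lemma wpow_mul (R : GData) (HR : is_GammaRing R) (w : car R 2) p q
  (F : ptmap (2 ^ (p + q)) (2 ^ p * 2 ^ q)) : vid F ->
  act F (wpow w (p + q)) = mul (wpow w p) (wpow w q).
Proof.
elim: p F => [|p IH] F HF.
  have E : mul (wpow w 0) (wpow w q) =
     act (psmash (castp (esym (expn0 2))) (pid (2 ^ q))) (mul (one R) (wpow w q)).
    by rewrite (G_smash HR) (G_id HR).
  rewrite E -{1}(G_unitl HR (wpow w q)) -(G_comp HR).
  congr act; apply: vid_eq.
    by apply: vid_pcomp => //; apply: vid_castp.
  by apply: vid_psmash => //; [apply: vid_castp | apply: vid_pid].
change (wpow w (p.+1 + q)) with
  (act (castp (esym (expnS 2 (p + q)))) (mul w (wpow w (p + q)))).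
have E1 : wpow w (p + q) = act (castp (esym (expnD 2 p q))) (mul (wpow w p) (wpow w q)).
  rewrite -(IH (castp (expnD 2 p q))); last exact: vid_castp.
  rewrite -(G_comp HR (castp (expnD 2 p q)) (castp (esym (expnD 2 p q)))) act_vid //.
  by apply: vid_pcomp; apply: vid_castp.
have E2 : mul w (act (castp (esym (expnD 2 p q))) (mul (wpow w p) (wpow w q))) =
   act (psmash (pid 2) (castp (esym (expnD 2 p q)))) (mul w (mul (wpow w p) (wpow w q))).
  by rewrite (G_smash HR) (G_id HR).
have E3 : mul w (mul (wpow w p) (wpow w q)) =
   act (castp (esym (mulnA 2 (2 ^ p) (2 ^ q)))) (mul (mul w (wpow w p)) (wpow w q)).
  by rewrite (G_assoc HR).
have E4 : mul (wpow w p.+1) (wpow w q) =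
   act (psmash (castp (esym (expnS 2 p))) (pid (2 ^ q))) (mul (mul w (wpow w p)) (wpow w q)).
  by rewrite (G_smash HR) (G_id HR).
rewrite E1 E2 E3 E4 -!(G_comp HR).
congr act; apply: vid_eq.
  by repeat first [assumption | done | apply: vid_pid | apply: vid_castp | apply: vid_pcomp | apply: vid_psmash].
by apply: vid_psmash; [rewrite expnS | apply: vid_castp | apply: vid_pid].
Qed.

Unset Implicit Arguments.

Theorem theorem2p2 (R : GData) (HR : is_GammaRing R) (w : car R 2)
  (Hw : formal_sum_law w) :
  exists phi : forall n, car HN n -> car R n,
    [/\ is_mult phi,
        (forall n, phi (2 ^ n) (ones (2 ^ n)) = wpow w n),
        (forall psi : forall n, car HN n -> car R n,
            is_mult psi -> (forall n, psi (2 ^ n) (ones (2 ^ n)) = wpow w n) ->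
            forall k (a : car HN k), psi k a = phi k a)
      & (forall k (a : car HN k) n (f : ptmap (2 ^ n) k),
            act f (ones (2 ^ n)) = a -> phi k a = act f (wpow w n))].
Proof.
pose phi := fun k (a : car HN k) => act (rf a) (wpow w (rn a)).
have P4 : forall k (a : car HN k) n (f : ptmap (2 ^ n) k),
    fib f = a -> phi k a = act f (wpow w n).
  move=> k a n f <-; rewrite /phi; apply: (welldef HR Hw); exact: fib_rf.
have P2 : forall n, phi (2 ^ n) (ones (2 ^ n)) = wpow w n.
  by move=> n; rewrite (P4 _ _ n (pid _)) ?fib_pid // (G_id HR).
exists phi; split => //.
- split; [|split].
  + move=> n m f x /=.
    rewrite (P4 _ _ _ (pcomp f (rf x))); first by rewrite (G_comp HR).
    by rewrite /fib HN_comp -/(fib (rf x)) fib_rf.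
  + change (phi (2 ^ 0) (ones (2 ^ 0)) = one R).
    by rewrite P2 /= act_vid //; apply: vid_castp.
  + move=> n m x y /=.
    rewrite /phi -(G_smash HR) -(wpow_mul HR w (vid_castp (expnD 2 (rn x) (rn y)))).
    rewrite -(G_comp HR); apply: P4.
    rewrite /fib HN_comp (HN_vid (expnD 2 (rn x) (rn y)) (vid_castp _)) HN_smash !fib_rf //.
- move=> psi [Hn _] Hp k a.
  have E := fib_rf a.
  rewrite -[in LHS]E /fib /= Hn Hp.
  by apply: esym; apply: P4; rewrite fib_rf.
Qed.
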